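(* Let $(X,d)$ be a compact metric space and $f:X\to X$ continuous. Then for every entropy pair $(x,y)\in E(X,f)$ we have $(x,y)\in CR(f)^2$ and $x\sim y$.
   Context: A pair $(x,y)\in X^2$ with $x\ne y$ is an entropy pair if for all closed neighborhoods $A$ of $x$ and $B$ of $y$ with $A\cap B=\emptyset$, $h(f,\{X\setminus A,X\setminus B\})>0$, where $h(f,\mathcal U)$ is the entropy of $f$ relative to the open cover $\mathcal U$; $E(X,f)$ is the set of entropy pairs. A $\delta$-chain of $f$ is a finite sequence $(x_i)_{i=0}^k$, $k\ge1$, with $d(f(x_i),x_{i+1})\le\delta$; a $\delta$-cycle is a $\delta$-chain with $x_0=x_k$. $CR(f)$ is the set of points $x$ such that for every $\delta>0$ there is a $\delta$-cycle starting and ending at $x$. For $x,y\in CR(f)$, $x\sim y$ iff for every $\delta>0$ there are integers $m>0$, $N>0$ such that for every $n\ge N$ there are $\delta$-chains $(x_i)_{i=0}^{mn},(y_i)_{i=0}^{mn}$ in $CR(f)$ with $x_0=y_{mn}=x$, $x_{mn}=y_0=y$. *)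

(* Defs.v *)
From Stdlib Require Import Reals List.
Open Scope R_scope.
Set Implicit Arguments.

Section Dyn.
Variables (X : Type) (d : X -> X -> R).

Definition is_metric : Prop :=
  (forall x y, 0 <= d x y) /\
  (forall x y, d x y = 0 <-> x = y) /\
  (forall x y, d x y = d y x) /\
  (forall x y z, d x z <= d x y + d y z).

(** compactness (sequential; equivalent for metric spaces) *)
Definition seq_conv (u : nat -> X) (l : X) : Prop :=
  forall eps, 0 < eps -> exists N, forall n, (N <= n)%nat -> d (u n) l < eps.

Definition compact_space : Prop :=
  forall u : nat -> X, exists (phi : nat -> nat) (l : X),
    (forall n, (phi n < phi (S n))%nat) /\ seq_conv (fun n => u (phi n)) l.

Definition continuous_map (f : X -> X) : Prop :=
  forall x eps, 0 < eps -> exists del, 0 < del /\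
    forall y, d x y < del -> d (f x) (f y) < eps.

Definition closed_set (A : X -> Prop) : Prop :=
  forall y, (forall eps, 0 < eps -> exists z, A z /\ d y z < eps) -> A y.

Definition closed_nbhd (x : X) (A : X -> Prop) : Prop :=
  closed_set A /\ exists r, 0 < r /\ forall z, d x z < r -> A z.

(** Entropy of f relative to an open cover U indexed by I.
    The n-th join U v f^-1 U v ... v f^-(n-1) U has members
    indexed by words w (only w 0 .. w (n-1) matter). *)
Definition join_member (f : X -> X) (I : Type) (U : I -> X -> Prop)
  (n : nat) (w : nat -> I) (x : X) : Prop :=
  forall i, (i < n)%nat -> U (w i) (Nat.iter i f x).

Definition join_subcover (f : X -> X) (I : Type) (U : I -> X -> Prop)
  (n : nat) (ws : list (nat -> I)) : Prop :=
  forall x, exists w, In w ws /\ join_member f U n w x.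

Definition min_subcover_card (f : X -> X) (I : Type) (U : I -> X -> Prop)
  (n k : nat) : Prop :=
  (exists ws, length ws = k /\ join_subcover f U n ws) /\
  (forall ws, join_subcover f U n ws -> (k <= length ws)%nat).

Definition cover_entropy (f : X -> X) (I : Type) (U : I -> X -> Prop)
  (h : R) : Prop :=
  exists N : nat -> nat,
    (forall n, min_subcover_card f U (S n) (N n)) /\
    Un_cv (fun n => ln (INR (N n)) / INR (S n)) h.

Definition entropy_pair (f : X -> X) (x y : X) : Prop :=
  x <> y /\
  forall A B : X -> Prop, closed_nbhd x A -> closed_nbhd y B ->
    (forall z, ~ (A z /\ B z)) ->
    exists h, cover_entropy f
                (fun b : bool => fun z => if b then ~ A z else ~ B z) h
              /\ 0 < h.

Definition delta_chain (f : X -> X) (del : R) (k : nat) (c : nat -> X) : Prop :=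
  (1 <= k)%nat /\ forall i, (i < k)%nat -> d (f (c i)) (c (S i)) <= del.

Definition CR (f : X -> X) (x : X) : Prop :=
  forall del, 0 < del -> exists k c, delta_chain f del k c /\ c O = x /\ c k = x.

Definition cr_rel (f : X -> X) (x y : X) : Prop :=
  CR f x /\ CR f y /\
  forall del, 0 < del -> exists m N, (0 < m)%nat /\ (0 < N)%nat /\
    forall n, (N <= n)%nat -> exists cx cy : nat -> X,
      delta_chain f del (m * n) cx /\ delta_chain f del (m * n) cy /\
      (forall i, (i <= m * n)%nat -> CR f (cx i) /\ CR f (cy i)) /\
      cx O = x /\ cy (m * n)%nat = x /\ cx (m * n)%nat = y /\ cy O = y.

End Dyn.

(* Main.v *)
Require Import Defs.
From Stdlib Require Import Reals List Lia Lra Arith Classical ClassicalEpsilon ClassicalDescription.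
Open Scope R_scope.

Lemma arch_inv (r : R) : 0 < r -> exists N : nat, forall n, (N <= n)%nat -> / INR (S n) < r.
Proof.
  intro Hr. destruct (INR_unbounded (/ r)) as [N HN].
  exists N. intros n Hn.
  assert (HS : INR N <= INR (S n)) by (apply le_INR; lia).
  assert (Hp : 0 < / r) by (apply Rinv_0_lt_compat; lra).
  rewrite <- (Rinv_inv r).
  apply Rinv_lt_contravar; [apply Rmult_lt_0_compat; lra | lra].
Qed.

Lemma least_nat (Q : nat -> Prop) : (exists n, Q n) -> exists n, Q n /\ forall m, Q m -> (n <= m)%nat.
Proof.
  intros [n Hn]. apply NNPP. intro Hno.
  assert (H : forall k, forall m, (m <= k)%nat -> ~ Q m).
  { induction k as [|k IH]; intros m Hm HQ.
    - apply Hno. exists m. split; auto. intros m' _. lia.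
    - apply Hno. exists m. split; auto. intros m' Hm'.
      destruct (Compare_dec.le_lt_dec m m') as [|Hlt]; auto. exfalso. apply (IH m'); auto; lia. }
  apply (H n n); auto.
Qed.

Lemma fin_choice (Q : nat -> nat -> Prop) (M : nat) :
  (forall c, (c <= M)%nat -> exists s, Q c s) -> exists sf : nat -> nat, forall c, (c <= M)%nat -> Q c (sf c).
Proof.
  induction M as [|M IH]; intro H.
  - destruct (H 0%nat (le_n 0)) as [s Hs]. exists (fun _ => s). intros c Hc.
    replace c with 0%nat by lia. auto.
  - destruct IH as [sf Hsf]. { intros c Hc; apply H; lia. }
    destruct (H (S M) (le_n _)) as [s Hs].
    exists (fun c => if Nat.eqb c (S M) then s else sf c). intros c Hc.
    destruct (Nat.eqb_spec c (S M)); subst; auto. apply Hsf; lia.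
Qed.

Lemma phi_ge (phi : nat -> nat) : (forall n, (phi n < phi (S n))%nat) -> forall n, (n <= phi n)%nat.
Proof. intros H n; induction n; [lia|]. specialize (H n); lia. Qed.


Fixpoint cnt (p : nat -> nat) (M i : nat) : nat :=
  match M with O => O | S M' => (cnt p M' i + (if Nat.ltb (p M') i then 1 else 0))%nat end.

Lemma cnt_le p M i : (cnt p M i <= M)%nat.
Proof. induction M; simpl; [lia|]. destruct (Nat.ltb (p M) i); lia. Qed.

Lemma cnt_ext p q M i : (forall k, (k < M)%nat -> p k = q k) -> cnt p M i = cnt q M i.
Proof.
  induction M; intro H; simpl; auto. rewrite IHM by (intros; apply H; lia). rewrite H by lia. reflexivity.
Qed.

Lemma cnt_mono p M i j : (i <= j)%nat -> (cnt p M i <= cnt p M j)%nat.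
Proof.
  intro Hij. induction M; simpl; [lia|].
  destruct (Nat.ltb_spec (p M) i); destruct (Nat.ltb_spec (p M) j); lia.
Qed.

Lemma cnt_strict p M i j k : (k < M)%nat -> (i <= p k)%nat -> (p k < j)%nat -> (cnt p M i < cnt p M j)%nat.
Proof.
  intros Hk H1 H2. induction M; [lia|]. simpl.
  destruct (Nat.eq_dec k M).
  - subst. pose proof (cnt_mono p M i j ltac:(lia)).
    destruct (Nat.ltb_spec (p M) i); destruct (Nat.ltb_spec (p M) j); lia.
  - specialize (IHM ltac:(lia)).
    destruct (Nat.ltb_spec (p M) i); destruct (Nat.ltb_spec (p M) j); lia.
Qed.

Fixpoint enum (B J : nat) : list (nat -> nat) :=
  match J with
  | O => (fun _ => O) :: nil
  | S J' => flat_map (fun e => map (fun v => fun k => if Nat.eqb k J' then v else e k) (seq 0 (S B))) (enum B J')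
  end.

Lemma flat_map_len_const {A C : Type} (g : A -> list C) (k : nat) (l : list A) :
  (forall e, length (g e) = k) -> length (flat_map g l) = (k * length l)%nat.
Proof.
  intro H. induction l; simpl; [lia|]. rewrite length_app, IHl, H. lia.
Qed.

Lemma enum_len B J : length (enum B J) = Nat.pow (S B) J.
Proof.
  induction J; [reflexivity|]. cbn [enum].
  rewrite (flat_map_len_const _ (S B)).
  - rewrite IHJ. rewrite Nat.pow_succ_r'. reflexivity.
  - intro e. rewrite length_map, length_seq. reflexivity.
Qed.

Lemma enum_cover B J q : (forall k, (k < J)%nat -> (q k <= B)%nat) ->
  exists e, In e (enum B J) /\ forall k, (k < J)%nat -> e k = q k.
Proof.
  revert q. induction J; intros q Hq.
  - exists (fun _ => O). simpl. split; auto. intros; lia.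
  - destruct (IHJ q) as [e [He Heq]]. { intros; apply Hq; lia. }
    exists (fun k => if Nat.eqb k J then q J else e k). split.
    + assert (Hin : In (q J) (seq 0 (S B))) by (apply in_seq; specialize (Hq J (le_n _)); lia).
      cbn [enum]. apply in_flat_map. exists e. split; [exact He|].
      exact (in_map (fun v k => if Nat.eqb k J then v else e k) _ _ Hin).
    + intros k Hk. destruct (Nat.eqb_spec k J); subst; auto. apply Heq. lia.
Qed.

Definition word (P : nat -> nat -> Prop) (M : nat) (p : nat -> nat) : nat -> bool :=
  fun i => if excluded_middle_informative (P (p (M + cnt p M i)%nat) i) then false else true.

Lemma word_ext P M e q : (forall k, (k < 2 * M + 1)%nat -> e k = q k) -> forall i, word P M e i = word P M q i.
Proof.
  intros H i. unfold word. rewrite (cnt_ext e q M i) by (intros; apply H; lia).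
  rewrite (H (M + cnt q M i)%nat) by (pose proof (cnt_le q M i); lia). reflexivity.
Qed.


Lemma ln_mono (a b : R) : 0 < a -> a <= b -> ln a <= ln b.
Proof.
  intros Ha Hab. destruct (Rle_lt_or_eq_dec a b Hab) as [H|H].
  - left. apply ln_increasing; auto.
  - subst. right. reflexivity.
Qed.

Lemma ln_le_x (a : R) : 0 < a -> ln a <= a - 1.
Proof. intro Ha. pose proof (exp_ineq1_le (ln a)). rewrite exp_ln in H by exact Ha. lra. Qed.

Lemma ent_zero (N : nat -> nat) (J : nat) (h : R) :
  (forall n, (1 <= N n)%nat /\ (N n <= Nat.pow (S (S n)) J)%nat) ->
  Un_cv (fun n => ln (INR (N n)) / INR (S n)) h -> h <= 0.
Proof.
  intros HN Hcv. apply Rnot_lt_le. intro Hh.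
  destruct (Hcv (h / 2)) as [N0 HN0]; [lra|].
  destruct (INR_unbounded ((4 * INR J + h) / h)) as [K1 HK1].
  set (K := (K1 + N0 + 2)%nat).
  set (n := (K * K - 2)%nat).
  assert (HKK : (K <= K * K)%nat) by (unfold K; nia).
  assert (Hn : (N0 <= n)%nat) by (unfold n, K in *; nia).
  assert (HSn : (S (S n) = K * K)%nat) by (unfold n, K in *; nia).
  specialize (HN0 n Hn). unfold R_dist in HN0.
  set (k := INR K). set (j := INR J).
  assert (Hk : 2 <= k) by (unfold k, K; replace 2 with (INR 2) by (simpl; lra); apply le_INR; lia).
  assert (Hj : 0 <= j) by apply pos_INR.
  assert (HkK1 : INR K1 <= k) by (unfold k, K; apply le_INR; lia).
  assert (Hkh : 4 * j + h <= k * h).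
  { assert (((4 * INR J + h) / h) * h = 4 * INR J + h) by (field; lra).
    fold j in H. assert ((4 * j + h) / h <= k) by (fold j in HK1; lra).
    apply Rmult_le_compat_r with (r := h) in H0; lra. }
  assert (HS : INR (S n) = k * k - 1).
  { assert (INR (S (S n)) = k * k) by (rewrite HSn, mult_INR; reflexivity).
    rewrite S_INR in H. lra. }
  destruct (HN n) as [H1 H2].
  assert (HL : ln (INR (N n)) <= 2 * j * (k - 1)).
  { assert (HNpos : 0 < INR (N n)) by (apply lt_0_INR; lia).
    apply le_INR in H2. rewrite pow_INR, HSn, mult_INR in H2. fold k in H2.
    pose proof (ln_mono _ _ HNpos H2) as L. rewrite ln_pow in L by nra.
    rewrite ln_mult in L by lra. pose proof (ln_le_x k ltac:(lra)). fold j in L. nra. }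
  assert (Hpos : 0 < k * k - 1) by nra.
  rewrite HS in HN0.
  assert (Hu : h / 2 < ln (INR (N n)) / (k * k - 1)).
  { apply Rabs_def2 in HN0. lra. }
  apply (Rmult_lt_compat_r (k * k - 1)) in Hu; [|lra].
  unfold Rdiv at 2 in Hu. rewrite Rmult_assoc, Rinv_l in Hu by lra.
  nra.
Qed.

Section Dyn.
Variables (X : Type) (d : X -> X -> R) (f : X -> X).
Hypothesis hd : is_metric d.
Hypothesis hc : compact_space d.
Hypothesis hf : continuous_map d f.

Lemma d_pos a b : 0 <= d a b. Proof. apply hd. Qed.
Lemma d_refl a : d a a = 0. Proof. apply hd. reflexivity. Qed.
Lemma d_sym a b : d a b = d b a. Proof. apply hd. Qed.
Lemma d_tri a b c : d a c <= d a b + d b c. Proof. apply hd. Qed.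

Lemma unif_cont (eps : R) : 0 < eps -> exists eta, 0 < eta /\ forall a b, d a b < eta -> d (f a) (f b) < eps.
Proof.
  intro He. apply NNPP. intro Hno.
  assert (H : forall n : nat, exists ab : X * X, d (fst ab) (snd ab) < / INR (S n) /\ eps <= d (f (fst ab)) (f (snd ab))).
  { intro n. apply NNPP. intro Hn. apply Hno. exists (/ INR (S n)). split.
    - apply Rinv_0_lt_compat. apply lt_0_INR; lia.
    - intros a b Hab. apply Rnot_le_lt. intro Hle. apply Hn. exists (a, b). simpl. auto. }
  set (g := fun n => proj1_sig (constructive_indefinite_description _ (H n))).
  assert (Hg : forall n, d (fst (g n)) (snd (g n)) < / INR (S n) /\ eps <= d (f (fst (g n))) (f (snd (g n)))).
  { intro n. unfold g. destruct (constructive_indefinite_description _ (H n)); auto. }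
  destruct (hc (fun n => fst (g n))) as [phi [l [Hphi Hconv]]].
  destruct (hf l (eps / 2)) as [del [Hdel Hcont]]; [lra|].
  destruct (Hconv (del / 2)) as [N1 HN1]; [lra|].
  destruct (arch_inv (del / 2)) as [N2 HN2]; [lra|].
  set (n := Nat.max N1 N2).
  specialize (HN1 n (Nat.le_max_l _ _)). simpl in HN1.
  assert (Hpn : (N2 <= phi n)%nat) by (pose proof (phi_ge phi Hphi n); pose proof (Nat.le_max_r N1 N2); unfold n in *; lia).
  specialize (HN2 _ Hpn). destruct (Hg (phi n)) as [H1 H2].
  set (a := fst (g (phi n))) in *. set (b := snd (g (phi n))) in *.
  assert (Hla' : d l a < del / 2) by (rewrite d_sym; exact HN1).
  assert (Hla : d l a < del) by lra.
  assert (Hlb : d l b < del) by (pose proof (d_tri l a b); lra).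
  pose proof (Hcont a Hla) as E1. pose proof (Hcont b Hlb) as E2.
  pose proof (d_tri (f a) (f l) (f b)) as E3. rewrite (d_sym (f a) (f l)) in E3. lra.
Qed.


Lemma tot_bdd (x0 : X) (r : R) : 0 < r ->
  exists (M : nat) (cent : nat -> X), forall w, exists k, (k < M)%nat /\ d w (cent k) < r.
Proof.
  intro Hr. apply NNPP. intro Hno.
  assert (H : forall l : list X, exists w, forall k, (k < length l)%nat -> r <= d w (nth k l x0)).
  { intro l. apply NNPP. intro Hl. apply Hno. exists (length l), (fun k => nth k l x0).
    intro w. apply NNPP. intro Hw. apply Hl. exists w. intros k Hk.
    apply Rnot_lt_le. intro Hlt. apply Hw. exists k. auto. }
  set (F := fun l => proj1_sig (constructive_indefinite_description _ (H l))).
  assert (HF : forall l k, (k < length l)%nat -> r <= d (F l) (nth k l x0)).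
  { intros l. unfold F. destruct (constructive_indefinite_description _ (H l)); auto. }
  set (L := fix L (n : nat) : list X := match n with O => nil | S n' => L n' ++ (F (L n') :: nil) end).
  assert (Hlen : forall n, length (L n) = n).
  { induction n; simpl; auto. rewrite length_app, IHn. simpl. lia. }
  assert (Hnth : forall n k, (k < n)%nat -> nth k (L n) x0 = F (L k)).
  { induction n; intros k Hk; [lia|]. simpl. destruct (Nat.eq_dec k n).
    - subst. rewrite app_nth2; rewrite Hlen; [|lia]. rewrite Nat.sub_diag. reflexivity.
    - rewrite app_nth1; [|rewrite Hlen; lia]. apply IHn. lia. }
  destruct (hc (fun n => F (L n))) as [phi [l [Hphi Hconv]]].
  destruct (Hconv (r / 2)) as [N HN]; [lra|].
  pose proof (HN N (le_n _)) as H1. pose proof (HN (S N) (le_S _ _ (le_n _))) as H2. simpl in H1, H2.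
  pose proof (HF (L (phi (S N))) (phi N)) as H3. rewrite Hlen in H3. specialize (H3 (Hphi N)).
  rewrite Hnth in H3 by apply Hphi.
  pose proof (d_tri (F (L (phi (S N)))) l (F (L (phi N)))) as H4.
  rewrite (d_sym l) in H4. lra.
Qed.

Lemma perturb (eps1 eta1 del1 beta : R)
  (huc : forall a b, d a b < eta1 -> d (f a) (f b) < eps1) (K : nat) (c c' : nat -> X) :
  (forall k, (k < K)%nat -> d (f (c k)) (c (S k)) <= del1) ->
  (forall k, (k <= K)%nat -> d (c' k) (c k) < eta1 /\ d (c' k) (c k) <= beta) ->
  forall k, (k < K)%nat -> d (f (c' k)) (c' (S k)) <= eps1 + del1 + beta.
Proof.
  intros Hc Hc' k Hk.
  destruct (Hc' k ltac:(lia)) as [H1 _]. destruct (Hc' (S k) ltac:(lia)) as [_ H2].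
  pose proof (huc _ _ H1) as H3. pose proof (Hc k Hk) as H4.
  pose proof (d_tri (f (c' k)) (f (c k)) (c' (S k))) as T1.
  pose proof (d_tri (f (c k)) (c (S k)) (c' (S k))) as T2.
  rewrite (d_sym (c (S k)) (c' (S k))) in T2. lra.
Qed.

Definition o (z : X) (k : nat) : X := Nat.iter k f z.

Lemma o_S z k : o z (S k) = f (o z k). Proof. reflexivity. Qed.


Definition Vn (eta : R) (w : X) : Prop := exists p, CR d f p /\ d p w < eta.

Lemma no_cycle_out (eta : R) : 0 < eta ->
  exists d0, 0 < d0 /\ forall w, ~ Vn eta w -> forall K c, delta_chain d f d0 K c -> c 0%nat = w -> c K = w -> False.
Proof.
  intro Heta. apply NNPP. intro Hno.
  assert (H : forall n : nat, exists w, ~ Vn eta w /\ exists K c, delta_chain d f (/ INR (S n)) K c /\ c 0%nat = w /\ c K = w).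
  { intro n. apply NNPP. intro Hn. apply Hno. exists (/ INR (S n)). split.
    - apply Rinv_0_lt_compat. apply lt_0_INR; lia.
    - intros w Hw K c Hc H0 HK. apply Hn. exists w. split; auto. exists K, c. auto. }
  set (g := fun n => proj1_sig (constructive_indefinite_description _ (H n))).
  assert (Hg : forall n, ~ Vn eta (g n) /\ exists K c, delta_chain d f (/ INR (S n)) K c /\ c 0%nat = g n /\ c K = g n).
  { intro n. unfold g. destruct (constructive_indefinite_description _ (H n)); auto. }
  destruct (hc g) as [phi [l [Hphi Hconv]]].
  assert (HCR : CR d f l).
  { intros del Hdel.
    destruct (unif_cont (del / 3)) as [eta1 [Heta1 Huc]]; [lra|].
    destruct (Hconv (Rmin eta1 (del / 3))) as [N1 HN1]; [apply Rmin_pos; lra|].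
    destruct (arch_inv (del / 3)) as [N2 HN2]; [lra|].
    set (n := Nat.max N1 N2).
    specialize (HN1 n (Nat.le_max_l _ _)).
    assert (Hpn : (N2 <= phi n)%nat) by (pose proof (phi_ge phi Hphi n); pose proof (Nat.le_max_r N1 N2); unfold n in *; lia).
    specialize (HN2 _ Hpn).
    destruct (Hg (phi n)) as [_ [K [c [[HK1 Hc] [H0 HKe]]]]].
    set (w := g (phi n)) in *.
    assert (Hlw1 : d l w < eta1) by (rewrite d_sym; pose proof (Rmin_l eta1 (del/3)); lra).
    assert (Hlw2 : d l w <= del / 3) by (rewrite d_sym; pose proof (Rmin_r eta1 (del/3)); lra).
    exists K, (fun k => if orb (Nat.eqb k 0) (Nat.eqb k K) then l else c k).
    split; [split|].
    - exact HK1.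
    - intros i Hi.
      pose proof (perturb (del/3) eta1 (/ INR (S (phi n))) (del/3) Huc K c
        (fun k => if orb (Nat.eqb k 0) (Nat.eqb k K) then l else c k) Hc) as P.
      assert (P' : forall k, (k < K)%nat -> d (f ((fun k => if orb (Nat.eqb k 0) (Nat.eqb k K) then l else c k) k))
          ((fun k => if orb (Nat.eqb k 0) (Nat.eqb k K) then l else c k) (S k)) <= del / 3 + / INR (S (phi n)) + del / 3).
      { apply P. intros k Hk.
        destruct (Nat.eqb_spec k 0); destruct (Nat.eqb_spec k K); simpl; subst;
          try (rewrite ?H0, ?HKe; split; lra);
          rewrite d_refl; split; lra. }
      specialize (P' i Hi). cbv beta in P'. cbv beta. lra.
    - simpl. split; [reflexivity|]. rewrite Nat.eqb_refl, Bool.orb_true_r. reflexivity. }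
  destruct (Hconv eta Heta) as [N HN]. specialize (HN N (le_n _)). simpl in HN.
  destruct (Hg (phi N)) as [HV _]. apply HV. exists l. split; auto. rewrite d_sym; auto.
Qed.


Lemma out_slots (x0 : X) (eta : R) : 0 < eta -> exists M, forall z n, exists p : nat -> nat,
  (forall k, (k < M)%nat -> (p k <= n)%nat) /\
  (forall t, (t < n)%nat -> ~ Vn eta (o z t) -> exists k, (k < M)%nat /\ p k = t).
Proof.
  intro Heta. destruct (no_cycle_out eta Heta) as [d0 [Hd0 Hcyc]].
  destruct (tot_bdd x0 (d0 / 2)) as [M [cent Hcent]]; [lra|].
  set (ci := fun w => proj1_sig (constructive_indefinite_description _ (Hcent w))).
  assert (Hci : forall w, (ci w < M)%nat /\ d w (cent (ci w)) < d0 / 2).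
  { intro w. unfold ci. destruct (constructive_indefinite_description _ (Hcent w)); auto. }
  exists M. intros z n.
  set (Ob := fun t => if excluded_middle_informative (Vn eta (o z t)) then false else true).
  set (O := filter Ob (seq 0 n)).
  assert (HinO : forall t, In t O <-> (t < n)%nat /\ ~ Vn eta (o z t)).
  { intro t. unfold O. rewrite filter_In, in_seq. unfold Ob.
    destruct (excluded_middle_informative (Vn eta (o z t))); split; intros [H1 H2].
    - discriminate. - contradiction. - split; [lia|auto]. - split; [lia|reflexivity]. }
  assert (Hcy : forall a b, In a O -> In b O -> (a < b)%nat -> ci (o z a) = ci (o z b) -> False).
  { intros a b Ha Hb Hab Heq.
    apply HinO in Ha. destruct Ha as [_ Ha].
    assert (Hd : d (o z b) (o z a) < d0).
    { destruct (Hci (o z a)) as [_ H1]. destruct (Hci (o z b)) as [_ H2]. rewrite Heq in H1.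
      pose proof (d_tri (o z b) (cent (ci (o z b))) (o z a)) as T. rewrite (d_sym (cent (ci (o z b))) (o z a)) in T. lra. }
    set (g := (b - a)%nat).
    apply (Hcyc (o z a) Ha g (fun k => if Nat.eqb k g then o z a else o z (a + k))).
    - split; [unfold g; lia|]. intros i Hi.
      destruct (Nat.eqb_spec i g); [lia|].
      destruct (Nat.eqb_spec (S i) g).
      + replace (f (o z (a + i))) with (o z b). { lra. }
        rewrite <- o_S. f_equal. unfold g in *. lia.
      + replace (o z (a + S i)) with (f (o z (a + i))). { rewrite d_refl; lra. }
        rewrite <- o_S. f_equal. lia.
    - destruct (Nat.eqb_spec 0 g); [unfold g in *; lia|]. rewrite Nat.add_0_r. reflexivity.
    - rewrite Nat.eqb_refl. reflexivity. }
  assert (Hlen : (length O <= M)%nat).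
  { assert (HN : NoDup (map (fun t => ci (o z t)) O)).
    { apply NoDup_map_NoDup_ForallPairs.
      - intros a b Ha Hb Heq. destruct (Nat.lt_total a b) as [H|[H|H]]; auto.
        + exfalso. exact (Hcy a b Ha Hb H Heq).
        + exfalso. exact (Hcy b a Hb Ha H (eq_sym Heq)).
      - apply NoDup_filter. apply seq_NoDup. }
    assert (Hi : incl (map (fun t => ci (o z t)) O) (seq 0 M)).
    { intros y Hy. apply in_map_iff in Hy. destruct Hy as [t [Ht _]]. subst.
      apply in_seq. destruct (Hci (o z t)). lia. }
    pose proof (NoDup_incl_length HN Hi) as L. rewrite length_map, length_seq in L. exact L. }
  exists (fun k => nth k O n). split.
  - intros k Hk. destruct (Compare_dec.lt_dec k (length O)) as [Hl|Hl].
    + pose proof (nth_In O n Hl) as Hin. apply HinO in Hin. lia.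
    + rewrite nth_overflow; lia.
  - intros t Ht HV. assert (Hin : In t O) by (apply HinO; auto).
    destruct (In_nth O t n Hin) as [k [Hk Hkt]]. exists k. split; [lia|auto].
Qed.


Definition Ucov (A B : X -> Prop) : bool -> X -> Prop := fun b z => if b then ~ A z else ~ B z.

Lemma cover_bound (A B V : X -> Prop) (M : nat) (P : nat -> nat -> Prop)
  (HAV : forall w, A w -> V w) (HBV : forall w, B w -> V w)
  (Hout : forall z n, exists p : nat -> nat, (forall k, (k < M)%nat -> (p k <= n)%nat) /\
          (forall t, (t < n)%nat -> ~ V (o z t) -> exists k, (k < M)%nat /\ p k = t))
  (Hseg : forall z n (I : nat -> Prop), (forall i, I i -> (i < n)%nat) ->
          (forall i j t, I i -> I j -> (i <= t)%nat -> (t <= j)%nat -> V (o z t)) ->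
          exists s, (s <= n)%nat /\ forall i, I i -> (A (o z i) -> P s i) /\ (B (o z i) -> ~ P s i)) :
  forall n, exists ws, (length ws <= Nat.pow (S n) (2 * M + 1))%nat /\ join_subcover f (Ucov A B) n ws.
Proof.
  intro n. exists (map (word P M) (enum n (2 * M + 1))). split.
  { rewrite length_map, enum_len. lia. }
  intro z. destruct (Hout z n) as [p [Hpb Hps]].
  set (I := fun c i => (i < n)%nat /\ cnt p M i = c /\ V (o z i)).
  destruct (fin_choice (fun c s => (s <= n)%nat /\ forall i, I c i -> (A (o z i) -> P s i) /\ (B (o z i) -> ~ P s i)) M)
    as [sf Hsf].
  { intros c Hc. apply (Hseg z n (I c)).
    - intros i [Hi _]. exact Hi.
    - intros i j t [Hi [Hci HVi]] [Hj [Hcj HVj]] Hit Htj.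
      apply NNPP. intro HVt.
      destruct (Hps t ltac:(lia) HVt) as [k [Hk Hpk]].
      assert (t <> i) by (intro; subst; contradiction).
      assert (t <> j) by (intro; subst; contradiction).
      pose proof (cnt_strict p M i j k Hk ltac:(lia) ltac:(lia)). lia. }
  set (q := fun k => if Nat.ltb k M then p k else sf (k - M)%nat).
  destruct (enum_cover n (2 * M + 1) q) as [e [He Heq]].
  { intros k Hk. unfold q. destruct (Nat.ltb_spec k M). - apply Hpb; auto. - apply Hsf. lia. }
  exists (word P M e). split. { apply in_map. exact He. }
  intros i Hi. rewrite (word_ext P M e q Heq i).
  unfold word, Ucov.
  assert (Hcq : cnt q M i = cnt p M i).
  { apply cnt_ext. intros k Hk. unfold q. destruct (Nat.ltb_spec k M); [reflexivity|lia]. }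
  rewrite Hcq.
  set (c := cnt p M i).
  assert (Hqc : q (M + c)%nat = sf c).
  { unfold q. destruct (Nat.ltb_spec (M + c) M); [lia|]. f_equal. lia. }
  rewrite Hqc.
  assert (Hc : (c <= M)%nat) by apply cnt_le.
  destruct (Hsf c Hc) as [_ Hspec].
  destruct (excluded_middle_informative (P (sf c) i)) as [HP|HP].
  - intro HB. assert (HI : I c i) by (split; [exact Hi|split; [reflexivity|apply HBV; exact HB]]).
    apply (proj2 (Hspec i HI) HB HP).
  - intro HA. assert (HI : I c i) by (split; [exact Hi|split; [reflexivity|apply HAV; exact HA]]).
    apply HP. apply (proj1 (Hspec i HI) HA).
Qed.


Lemma cover_ent_le0 (x0 : X) (A B V : X -> Prop) (M : nat) (P : nat -> nat -> Prop)
  (HAV : forall w, A w -> V w) (HBV : forall w, B w -> V w)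
  (Hout : forall z n, exists p : nat -> nat, (forall k, (k < M)%nat -> (p k <= n)%nat) /\
          (forall t, (t < n)%nat -> ~ V (o z t) -> exists k, (k < M)%nat /\ p k = t))
  (Hseg : forall z n (I : nat -> Prop), (forall i, I i -> (i < n)%nat) ->
          (forall i j t, I i -> I j -> (i <= t)%nat -> (t <= j)%nat -> V (o z t)) ->
          exists s, (s <= n)%nat /\ forall i, I i -> (A (o z i) -> P s i) /\ (B (o z i) -> ~ P s i))
  (h : R) : cover_entropy f (fun b : bool => fun z => if b then ~ A z else ~ B z) h -> h <= 0.
Proof.
  intros [N [HN Hcv]]. apply (ent_zero N (2 * M + 1) h); auto.
  intro n. destruct (HN n) as [[ws [Hl Hj]] Hmin]. split.
  - destruct (Hj x0) as [w [Hw _]]. destruct ws; [destruct Hw|]. simpl in Hl. lia.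
  - destruct (cover_bound A B V M P HAV HBV Hout Hseg (S n)) as [ws' [Hl' Hj']].
    specialize (Hmin ws' Hj'). lia.
Qed.


Definition ball (r : R) (a : X) : X -> Prop := fun z => d a z <= r.

Lemma ball_nbhd r a : 0 < r -> closed_nbhd d a (ball r a).
Proof.
  intro Hr. split.
  - intros w Hw. unfold ball. apply Rnot_lt_le. intro Hlt.
    destruct (Hw (d a w - r)) as [z [Hz Hwz]]; [lra|]. unfold ball in Hz.
    pose proof (d_tri a z w). rewrite (d_sym z w) in H. lra.
  - exists r. split; auto. intros z Hz. unfold ball. lra.
Qed.

Lemma d_pos_neq x y : x <> y -> 0 < d x y.
Proof.
  intro H. destruct (d_pos x y) as [H1|H1]; auto. exfalso. apply H. apply hd. auto.
Qed.

Lemma ball_disj r x y : 2 * r < d x y -> forall z, ~ (ball r x z /\ ball r y z).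
Proof.
  intros H z [H1 H2]. unfold ball in *. pose proof (d_tri x z y). rewrite (d_sym z y) in H0. lra.
Qed.

Lemma orbit_chain (del eta : R) (Huc : forall a b, d a b < eta -> d (f a) (f b) < del / 2)
  (Heta : eta <= del / 2) z i g (c' : nat -> X) :
  (1 <= g)%nat -> (forall k, (k <= g)%nat -> d (c' k) (o z (i + k)) < eta) -> delta_chain d f del g c'.
Proof.
  intros Hg Hc. split; auto. intros k Hk.
  pose proof (perturb (del / 2) eta 0 eta Huc g (fun k => o z (i + k)) c') as P.
  assert (P' : forall k, (k < g)%nat -> d (f (c' k)) (c' (S k)) <= del / 2 + 0 + eta).
  { apply P.
    - intros k' _. rewrite Nat.add_succ_r, o_S, d_refl. lra.
    - intros k' Hk'. specialize (Hc k' Hk'). split; lra. }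
  specialize (P' k Hk). lra.
Qed.

Lemma two_visits (del eta : R) (Huc : forall a b, d a b < eta -> d (f a) (f b) < del / 2)
  (Heta : eta <= del / 2) a z i j :
  (i < j)%nat -> d a (o z i) < eta -> d a (o z j) < eta ->
  exists K c, delta_chain d f del K c /\ c 0%nat = a /\ c K = a.
Proof.
  intros Hij Hi Hj. set (g := (j - i)%nat).
  exists g, (fun k => if orb (Nat.eqb k 0) (Nat.eqb k g) then a else o z (i + k)).
  split; [|split].
  - apply (orbit_chain del eta Huc Heta z i); [unfold g; lia|].
    intros k Hk. destruct (Nat.eqb_spec k 0); destruct (Nat.eqb_spec k g); simpl.
    + subst. rewrite Nat.add_0_r. auto.
    + subst. rewrite Nat.add_0_r. auto.
    + subst. replace (i + g)%nat with j by (unfold g; lia). auto.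
    + rewrite d_refl. apply Rle_lt_trans with (d a (o z i)); [apply d_pos|auto].
  - reflexivity.
  - rewrite Nat.eqb_refl, Bool.orb_true_r. reflexivity.
Qed.

Lemma CR_both x y : entropy_pair d f x y -> CR d f x /\ CR d f y.
Proof.
  intros [Hxy HE].
  assert (Hd : 0 < d x y) by (apply d_pos_neq; auto).
  split; intros del Hdel; apply NNPP; intro Hno;
  (destruct (unif_cont (del / 2)) as [eta0 [Heta0 Huc0]]; [lra|]);
  set (eta := Rmin eta0 (del / 2));
  (assert (Heta : 0 < eta) by (apply Rmin_pos; lra));
  (assert (Heta2 : eta <= del / 2) by apply Rmin_r);
  (assert (Huc : forall a b, d a b < eta -> d (f a) (f b) < del / 2)
     by (intros a b Hab; apply Huc0; pose proof (Rmin_l eta0 (del/2)); fold eta in H; lra));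
  set (rho := Rmin (eta / 2) (d x y / 3));
  (assert (Hrho : 0 < rho) by (apply Rmin_pos; lra));
  (assert (Hrho1 : rho < eta) by (pose proof (Rmin_l (eta/2) (d x y / 3)); fold rho in H; lra));
  (assert (Hrho2 : 2 * rho < d x y) by (pose proof (Rmin_r (eta/2) (d x y / 3)); fold rho in H; lra));
  destruct (HE (ball rho x) (ball rho y) (ball_nbhd rho x Hrho) (ball_nbhd rho y Hrho)
              (ball_disj rho x y Hrho2)) as [h [Hent Hh]];
  apply (Rlt_not_le _ _ Hh).
  - apply (cover_ent_le0 x (ball rho x) (ball rho y) (fun _ => True) 0 (fun s i => i = s)); auto.
    + intros z n. exists (fun _ => 0%nat). split; intros; [lia|contradiction].
    + intros z n I HI _.
      destruct (classic (exists i, I i /\ ball rho x (o z i))) as [[i0 [Hi0 HA0]]|Hnone].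
      * exists i0. split; [specialize (HI i0 Hi0); lia|]. intros i Hi. split.
        -- intro HA. destruct (Nat.lt_total i i0) as [H|[H|H]]; auto; exfalso; apply Hno;
             [apply (two_visits del eta Huc Heta2 x z i i0) | apply (two_visits del eta Huc Heta2 x z i0 i)];
             unfold ball in *; auto; lra.
        -- intros HB Heq. subst. apply (ball_disj rho x y Hrho2 (o z i0)). auto.
      * exists n. split; auto. intros i Hi. split.
        -- intro HA. exfalso. apply Hnone. eauto.
        -- intros _ Heq. specialize (HI i Hi). lia.
  - apply (cover_ent_le0 x (ball rho x) (ball rho y) (fun _ => True) 0 (fun s i => i <> s)); auto.
    + intros z n. exists (fun _ => 0%nat). split; intros; [lia|contradiction].
    + intros z n I HI _.
      destruct (classic (exists i, I i /\ ball rho y (o z i))) as [[i0 [Hi0 HA0]]|Hnone].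
      * exists i0. split; [specialize (HI i0 Hi0); lia|]. intros i Hi. split.
        -- intros HA Heq. subst. apply (ball_disj rho x y Hrho2 (o z i0)). auto.
        -- intros HB Hne. apply Hne. destruct (Nat.lt_total i i0) as [H|[H|H]]; auto; exfalso; apply Hno;
             [apply (two_visits del eta Huc Heta2 y z i i0) | apply (two_visits del eta Huc Heta2 y z i0 i)];
             unfold ball in *; auto; lra.
      * exists n. split; auto. intros i Hi. split.
        -- intros _ Heq. specialize (HI i Hi). lia.
        -- intros HB. exfalso. apply Hnone. eauto.
Qed.


Definition chainCR (del : R) (a b : X) (k : nat) : Prop :=
  exists c, delta_chain d f del k c /\ (forall i, (i <= k)%nat -> CR d f (c i)) /\ c 0%nat = a /\ c k = b.

Lemma concat del a b e k1 k2 : chainCR del a b k1 -> chainCR del b e k2 -> chainCR del a e (k1 + k2).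
Proof.
  intros [c1 [[H1k H1] [H1C [H10 H1e]]]] [c2 [[H2k H2] [H2C [H20 H2e]]]].
  exists (fun i => if Nat.leb i k1 then c1 i else c2 (i - k1)%nat). split; [split|split; [|split]].
  - lia.
  - intros i Hi. destruct (Nat.leb_spec i k1); destruct (Nat.leb_spec (S i) k1).
    + apply H1; lia.
    + assert (Hik : i = k1) by lia. rewrite Hik. rewrite H1e, <- H20.
      replace (S k1 - k1)%nat with 1%nat by lia. apply H2. lia.
    + lia.
    + replace (S i - k1)%nat with (S (i - k1)) by lia. apply H2. lia.
  - intros i Hi. destruct (Nat.leb_spec i k1); [apply H1C; lia|apply H2C; lia].
  - simpl. auto.
  - destruct (Nat.leb_spec (k1 + k2) k1).
    + assert (k2 = 0%nat) by lia. lia.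
    + replace (k1 + k2 - k1)%nat with k2 by lia. auto.
Qed.

Lemma iter_xy del x y a : chainCR del x x a -> chainCR del x y a -> forall j, chainCR del x y (a * S j).
Proof.
  intros Hc Hxy j. induction j.
  - rewrite Nat.mul_1_r. auto.
  - replace (a * S (S j))%nat with (a + a * S j)%nat by lia. apply (concat _ _ x); auto.
Qed.

Lemma iter_yx del x y b : chainCR del x x b -> chainCR del y x b -> forall j, chainCR del y x (b * S j).
Proof.
  intros Hc Hyx j. induction j.
  - rewrite Nat.mul_1_r. auto.
  - replace (b * S (S j))%nat with (b * S j + b)%nat by lia. apply (concat _ _ x); auto.
Qed.

Lemma main_del x y : entropy_pair d f x y -> CR d f x -> CR d f y -> forall del, 0 < del ->
  exists P0 Q0, chainCR del x y P0 /\ chainCR del x x P0 /\ chainCR del y x Q0 /\ chainCR del x x Q0.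
Proof.
  intros [Hxy HE] HCx HCy del Hdel.
  assert (Hd : 0 < d x y) by (apply d_pos_neq; auto).
  destruct (unif_cont (del / 2)) as [eta0 [Heta0 Huc0]]; [lra|].
  set (eta := Rmin eta0 (del / 2)).
  assert (Heta : 0 < eta) by (apply Rmin_pos; lra).
  assert (Heta2 : eta <= del / 2) by apply Rmin_r.
  assert (Huc : forall a b, d a b < eta -> d (f a) (f b) < del / 2)
     by (intros a b Hab; apply Huc0; pose proof (Rmin_l eta0 (del/2)); fold eta in H; lra).
  set (V := Vn eta).
  destruct (out_slots x eta Heta) as [M HM].
  assert (Hpk : forall w, exists p, V w -> CR d f p /\ d p w < eta).
  { intro w. destruct (classic (V w)) as [[p Hp]|Hn]; [exists p; auto|exists w; intro; contradiction]. }
  set (pk := fun w => proj1_sig (constructive_indefinite_description _ (Hpk w))).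
  assert (Hpks : forall w, V w -> CR d f (pk w) /\ d (pk w) w < eta).
  { intro w. unfold pk. destruct (constructive_indefinite_description _ (Hpk w)); auto. }
  set (rho := Rmin (eta / 2) (d x y / 3)).
  assert (Hrho : 0 < rho) by (apply Rmin_pos; lra).
  assert (Hrho1 : rho < eta) by (pose proof (Rmin_l (eta/2) (d x y / 3)); fold rho in H; lra).
  assert (Hrho2 : 2 * rho < d x y) by (pose proof (Rmin_r (eta/2) (d x y / 3)); fold rho in H; lra).
  destruct (HE (ball rho x) (ball rho y) (ball_nbhd rho x Hrho) (ball_nbhd rho y Hrho)
              (ball_disj rho x y Hrho2)) as [h [Hent Hh]].
  assert (HAV : forall w, ball rho x w -> V w) by (intros w Hw; exists x; unfold ball in Hw; split; auto; lra).
  assert (HBV : forall w, ball rho y w -> V w) by (intros w Hw; exists y; unfold ball in Hw; split; auto; lra).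
  assert (Hdisj := ball_disj rho x y Hrho2).
  assert (Horb : forall z a b i j, (i < j)%nat -> (forall t, (i <= t)%nat -> (t <= j)%nat -> V (o z t)) ->
            CR d f a -> CR d f b -> d a (o z i) < eta -> d b (o z j) < eta -> chainCR del a b (j - i)).
  { intros z a b i j Hij HV Ha Hb Hai Hbj.
    set (g := (j - i)%nat).
    set (c' := fun k => if Nat.eqb k 0 then a else if Nat.eqb k g then b else pk (o z (i + k))).
    exists c'. split; [|split; [|split]].
    - apply (orbit_chain del eta Huc Heta2 z i); [unfold g; lia|].
      intros k Hk. unfold c'. destruct (Nat.eqb_spec k 0); [subst; rewrite Nat.add_0_r; auto|].
      destruct (Nat.eqb_spec k g); [subst; replace (i + g)%nat with j by (unfold g; lia); auto|].
      apply Hpks. apply HV; unfold g in *; lia.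
    - intros k Hk. unfold c'. destruct (Nat.eqb_spec k 0); auto. destruct (Nat.eqb_spec k g); auto.
      apply Hpks. apply HV; unfold g in *; lia.
    - reflexivity.
    - unfold c'. destruct (Nat.eqb_spec g 0); [unfold g in *; lia|]. rewrite Nat.eqb_refl. reflexivity. }
  destruct (classic (exists q, chainCR del y x q)) as [[q Hq]|Hnq].
  2: { exfalso. apply (Rlt_not_le _ _ Hh).
    apply (cover_ent_le0 x (ball rho x) (ball rho y) V M (fun s i => (i < s)%nat)); auto.
    intros z n I HI HIV.
    destruct (classic (exists i, I i /\ ball rho y (o z i))) as [Hex|Hnone].
    - destruct (least_nat _ Hex) as [s [[Hs HBs] Hmin]].
      exists s. split; [specialize (HI s Hs); lia|]. intros i Hi. split.
      + intro HA. destruct (Nat.lt_ge_cases i s) as [H|H]; auto. exfalso.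
        destruct (Nat.eq_dec i s); [subst; apply (Hdisj (o z s)); auto|].
        apply Hnq. exists (i - s)%nat. apply (Horb z y x s i); auto; [lia| |unfold ball in *; lra..].
        intros t H1 H2. apply (HIV s i t); auto.
      + intros HB Hlt. specialize (Hmin i (conj Hi HB)). lia.
    - exists n. split; auto. intros i Hi. split.
      + intros _. apply HI; auto.
      + intros HB _. apply Hnone. eauto. }
  set (Sx := fun v => v = 0%nat \/ chainCR del x x v).
  destruct (classic (exists p v, chainCR del x y p /\ Sx v /\ chainCR del x x (p + v))) as [[p [v [Hp [Hv Hpv]]]]|Hnp].
  2: { exfalso. apply (Rlt_not_le _ _ Hh).
    apply (cover_ent_le0 x (ball rho x) (ball rho y) V M
      (fun s i => (s <= i)%nat /\ exists v, Sx v /\ Sx (i - s + v)%nat)); auto.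
    intros z n I HI HIV.
    destruct (classic (exists i, I i /\ ball rho x (o z i))) as [Hex|Hnone].
    - destruct (least_nat _ Hex) as [s [[Hs HAs] Hmin]].
      exists s. split; [specialize (HI s Hs); lia|]. intros i Hi. split.
      + intro HA. specialize (Hmin i (conj Hi HA)). split; auto. exists 0%nat. split; [left; auto|].
        rewrite Nat.add_0_r. destruct (Nat.eq_dec i s); [left; lia|right].
        apply (Horb z x x s i); auto; [lia| |unfold ball in *; lra..].
        intros t H1 H2. apply (HIV s i t); auto.
      + intros HB [Hsi [v [Hv Hv2]]].
        destruct (Nat.eq_dec i s); [subst; apply (Hdisj (o z s)); auto|].
        apply Hnp. exists (i - s)%nat, v. split; [|split; auto].
        * apply (Horb z x y s i); auto; [lia| |unfold ball in *; lra..].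
          intros t H1 H2. apply (HIV s i t); auto.
        * destruct Hv2 as [Hv2|Hv2]; [lia|auto].
    - exists n. split; auto. intros i Hi. split.
      + intros HA. exfalso. apply Hnone. eauto.
      + intros HB [Hni _]. specialize (HI i Hi). lia. }
  assert (Hxy0 : chainCR del x y (p + v)).
  { destruct Hv as [Hv|Hv]; [subst; rewrite Nat.add_0_r; auto|].
    rewrite Nat.add_comm. apply (concat _ _ x); auto. }
  exists (p + v)%nat, (q + (p + v))%nat. split; [auto|split; [auto|split]].
  - apply (concat _ _ x); auto.
  - rewrite Nat.add_comm. apply (concat _ _ y); auto.
Qed.

End Dyn.

Theorem lemma3p3 (X : Type) (d : X -> X -> R) (f : X -> X)
  (hd : is_metric d) (hc : compact_space d) (hf : continuous_map d f) :
  forall x y : X, entropy_pair d f x y ->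
    (CR d f x /\ CR d f y) /\ cr_rel d f x y.
Proof.
  intros x y He.
  destruct (CR_both X d f hd hc hf x y He) as [HCx HCy].
  split; [auto|]. split; [auto|split; [auto|]].
  intros del Hdel.
  destruct (main_del X d f hd hc hf x y He HCx HCy del Hdel) as [P0 [Q0 [H1 [H2 [H3 H4]]]]].
  assert (HP : (1 <= P0)%nat) by (destruct H1 as [c [[Hk _] _]]; exact Hk).
  assert (HQ : (1 <= Q0)%nat) by (destruct H3 as [c [[Hk _] _]]; exact Hk).
  exists (P0 * Q0)%nat, 1%nat. split; [nia|split; [lia|]].
  intros n Hn.
  assert (E1 : (P0 * Q0 * n = P0 * S (Q0 * n - 1))%nat) by nia.
  assert (E2 : (P0 * Q0 * n = Q0 * S (P0 * n - 1))%nat) by nia.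
  destruct (iter_xy X d f del x y P0 H2 H1 (Q0 * n - 1)) as [cx [Hcx [HcxC [Hcx0 Hcxe]]]].
  destruct (iter_yx X d f del x y Q0 H4 H3 (P0 * n - 1)) as [cy [Hcy [HcyC [Hcy0 Hcye]]]].
  exists cx, cy. rewrite E1 at 1. split; [exact Hcx|].
  rewrite E2 at 1. split; [exact Hcy|]. split.
  - intros i Hi. split; [apply HcxC; lia|apply HcyC; lia].
  - split; [auto|]. split; [rewrite E2; auto|]. split; [rewrite E1; auto|auto].
Qed.
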